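(* Let $Y\in\mathbb{R}^{N\times M}$, $k\ge1$, and $\alpha,\nu,\gamma\ge0$. Consider $$\min_{A\in\mathbb{R}^{N\times k},\,P\in\mathbb{R}^{k\times M},\ A\ge0,\ P\ge0} J(A,P):=\|Y-AP\|_{F,2}^2+\alpha\|A\|_{F,1}+\nu\|P\|_{F,1}+\gamma\|PP^T-I\|_{F,1},$$ where $I$ is the $k\times k$ identity. If $(A,P)$ is a (local) minimizer of this problem, then for any constants $c_1,c_2>0$ there exist matrices $L\in\mathbb{R}^{k\times k}$, $\mu_A,\lambda_A\in\mathbb{R}^{N\times k}$, $\mu_P,\lambda_P\in\mathbb{R}^{k\times M}$, $\lambda_L\in\mathbb{R}^{k\times k}$ such that $$\begin{cases} 0=2APP^T-2YP^T+\mu_A+\alpha\lambda_A,\\ \lambda_A=\dfrac{\lambda_A+c_2A}{\max(1,|\lambda_A+c_2A|)},\\ \mu_A=\min(\mu_A+c_1A,0),\\ 0=-2A^TY+2A^TAP+\mu_P+\nu\lambda_P+\gamma(\lambda_L+\lambda_L^T)P,\\ \lambda_P=\dfrac{\lambda_P+c_2P}{\max(1,|\lambda_P+c_2P|)},\\ L=PP^T-I,\\ \lambda_L=\dfrac{\lambda_L+c_2L}{\max(1,|\lambda_L+c_2L|)},\\ \mu_P=\min(\mu_P+c_1P,0), \end{cases}$$ where division, maximum, minimum and absolute value are taken entrywise.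
   Context: For a matrix $X$, $\|X\|_{F,2}=\sqrt{\sum_{i,j}|X_{ij}|^2}$ and $\|X\|_{F,1}=\sum_{i,j}|X_{ij}|$; $A\ge0$ means entrywise nonnegativity. Necessary optimality is understood in the sense of generalized (Clarke) subdifferential calculus for this nonsmooth, nonconvex problem. *)

(* Defs.v *)
From HB Require Import structures.
From mathcomp Require Import all_boot all_order all_algebra.
From mathcomp Require Import reals.
Set Implicit Arguments. Unset Strict Implicit. Unset Printing Implicit Defensive.
Import Order.TTheory GRing.Theory Num.Theory.
Local Open Scope ring_scope.

Definition mx_nonneg (R : realType) m n (X : 'M[R]_(m, n)) : Prop :=
  forall i j, 0 <= X i j.

Definition frob2sq (R : realType) m n (X : 'M[R]_(m, n)) : R :=
  \sum_(i < m) \sum_(j < n) (X i j) ^+ 2.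

Definition frob1 (R : realType) m n (X : 'M[R]_(m, n)) : R :=
  \sum_(i < m) \sum_(j < n) `|X i j|.

Definition Jobj (R : realType) N M k (Y : 'M[R]_(N, M))
  (alpha nu gamma : R) (A : 'M[R]_(N, k)) (P : 'M[R]_(k, M)) : R :=
  frob2sq (Y - A *m P) + alpha * frob1 A + nu * frob1 P
  + gamma * frob1 (P *m P^T - 1%:M).

Definition local_minimizer (R : realType) N M k (Y : 'M[R]_(N, M))
  (alpha nu gamma : R) (A : 'M[R]_(N, k)) (P : 'M[R]_(k, M)) : Prop :=
  mx_nonneg A /\ mx_nonneg P /\
  exists eps : R, 0 < eps /\
    forall (A' : 'M[R]_(N, k)) (P' : 'M[R]_(k, M)),
      mx_nonneg A' -> mx_nonneg P' ->
      (forall i j, `|A' i j - A i j| < eps) ->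
      (forall i j, `|P' i j - P i j| < eps) ->
      Jobj Y alpha nu gamma A P <= Jobj Y alpha nu gamma A' P'.

Definition proj_box (R : realType) m n (c : R) (X Z : 'M[R]_(m, n)) : 'M[R]_(m, n) :=
  \matrix_(i, j) ((X i j + c * Z i j) / Num.max 1 `|X i j + c * Z i j|).

Definition min0 (R : realType) m n (c : R) (X Z : 'M[R]_(m, n)) : 'M[R]_(m, n) :=
  \matrix_(i, j) Num.min (X i j + c * Z i j) 0.

(* Main.v *)
Require Import Defs.
From HB Require Import structures.
From mathcomp Require Import all_boot all_order all_algebra.
From mathcomp Require Import reals ring lra.
Set Implicit Arguments. Unset Strict Implicit. Unset Printing Implicit Defensive.
Import Order.TTheory GRing.Theory Num.Theory.
Local Open Scope ring_scope.

Definition psi (R : realType) (x d : R) : R :=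
  if x == 0 then `|d| else Num.sg x * d.

Definition upx (R : realType) (f : R -> R) (a b : R) : Prop :=
  exists K : R, forall s, 0 < s -> s <= 1 -> f s <= a + b * s + K * s ^+ 2.

Lemma upx_ext (R : realType) (f g : R -> R) a b :
  (forall s, 0 < s -> s <= 1 -> f s = g s) -> upx g a b -> upx f a b.
Proof. move=> H [K HK]; exists K => s s0 s1; rewrite H //; exact: HK. Qed.

Lemma upx_add (R : realType) (f g : R -> R) a b c d :
  upx f a b -> upx g c d -> upx (fun s => f s + g s) (a + c) (b + d).
Proof.
move=> [K1 H1] [K2 H2]; exists (K1 + K2) => s s0 s1.
have := H1 s s0 s1; have := H2 s s0 s1; lra.
Qed.

Lemma upx_scale (R : realType) (f : R -> R) a b c : 0 <= c ->
  upx f a b -> upx (fun s => c * f s) (c * a) (c * b).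
Proof.
move=> c0 [K H]; exists (c * K) => s s0 s1.
have := H s s0 s1 => h.
have : c * f s <= c * (a + b * s + K * s ^+ 2) by rewrite ler_wpM2l.
move=> h2; apply: (le_trans h2); rewrite !mulrDr !mulrA; lra.
Qed.

Lemma upx_sum (R : realType) n (F : 'I_n -> R -> R) (a b : 'I_n -> R) :
  (forall i, upx (F i) (a i) (b i)) ->
  upx (fun s => \sum_(i < n) F i s) (\sum_(i < n) a i) (\sum_(i < n) b i).
Proof.
move=> H; have [K HK] := fin_all_exists H.
exists (\sum_(i < n) K i) => s s0 s1.
rewrite mulr_suml mulr_suml -!big_split /=.
by apply: ler_sum => i _; exact: HK.
Qed.

Lemma sq_bound (R : realType) (a b c s : R) : 0 < s -> s <= 1 ->
  (a + b * s + c * s ^+ 2) ^+ 2 <=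
  a ^+ 2 + (2 * a * b) * s + (b ^+ 2 + 2 * `|a| * `|c| + 2 * `|b| * `|c| + c ^+ 2) * s ^+ 2.
Proof.
move=> s0 s1.
have h1 : a * c <= `|a| * `|c| by rewrite -normrM ler_norm.
have h2 : b * c <= `|b| * `|c| by rewrite -normrM ler_norm.
have h3 : 0 <= `|b| * `|c| by rewrite mulr_ge0.
have h4 : 0 <= c ^+ 2 by rewrite sqr_ge0.
have h5 : b * c * s <= `|b| * `|c|.
  case: (lerP 0 (b * c)) => hb.
    apply: le_trans h2; rewrite -{2}(mulr1 (b * c)); exact: ler_wpM2l.
  apply: le_trans h3; rewrite nmulr_rle0 //; exact: ltW.
have h6 : c ^+ 2 * s ^+ 2 <= c ^+ 2.
  rewrite -{2}(mulr1 (c ^+ 2)); apply: ler_wpM2l => //.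
  rewrite expr_le1 //; exact: ltW.
have h7: 0 < s ^+ 2 by rewrite exprn_gt0.
rewrite !expr2 in h6 h7 h4 *.
nra.
Qed.

Lemma abs_key (R : realType) (a y : R) : a != 0 ->
  `|a + y| <= `|a| + Num.sg a * y + 2 * y ^+ 2 / `|a|.
Proof.
move=> a0; have na : 0 < `|a| by rewrite normr_gt0.
have hy : 0 <= y ^+ 2 / `|a| by rewrite divr_ge0 // sqr_ge0.
case: (ltrgt0P a) a0 na hy => // ha _ na hy.
- rewrite gtr0_sg // mul1r.
  case: (lerP 0 (a + y)) => hay.
    rewrite ger0_norm //; lra.
  rewrite ltr0_norm //.
  suff : - (a + y) * a <= y ^+ 2.
    move=> h.
    have : - (a + y) <= y ^+ 2 / a by rewrite ler_pdivlMr.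
    lra.
  rewrite expr2; nra.
- rewrite ltr0_sg //.
  case: (lerP 0 (a + y)) => hay.
    rewrite ger0_norm //.
    suff : (a + y) * (- a) <= y ^+ 2.
      move=> h.
      have : (a + y) <= y ^+ 2 / (- a) by rewrite ler_pdivlMr // oppr_gt0.
      lra.
    rewrite expr2; nra.
  rewrite ltr0_norm //; lra.
Qed.

Definition absK (R : realType) (a b c : R) : R :=
  if a == 0 then `|c| else `|c| + 2 * (`|b| + `|c|) ^+ 2 / `|a|.

Lemma abs_bound (R : realType) (a b c s : R) : 0 < s -> s <= 1 ->
  `|a + b * s + c * s ^+ 2| <= `|a| + psi a b * s + absK a b c * s ^+ 2.
Proof.
move=> s0 s1; rewrite /psi /absK.
have ns : `|s| = s by rewrite gtr0_norm.
have ns2 : `|s ^+ 2| = s ^+ 2 by rewrite ger0_norm // exprn_ge0 // ltW.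
case: eqP => [->|/eqP a0].
  rewrite normr0 !add0r; apply: le_trans (ler_normD _ _) _.
  by rewrite !normrM ns expr2.
rewrite -addrA; apply: le_trans (abs_key _ a0) _.
set y := b * s + c * s ^+ 2.
have hs2 : s ^+ 2 <= s by rewrite expr2; nra.
have hy : `|y| <= (`|b| + `|c|) * s.
  apply: le_trans (ler_normD _ _) _; rewrite !normrM ns mulrDl.
  have := hs2; rewrite expr2 => h; rewrite lerD2l ler_wpM2l //.
have hy2 : y ^+ 2 <= (`|b| + `|c|) ^+ 2 * s ^+ 2.
  rewrite -(real_normK (num_real y)) -exprMn.
  have := normr_ge0 y; rewrite !expr2; nra.
have hsg : Num.sg a * y <= Num.sg a * b * s + `|c| * s ^+ 2.
  rewrite /y mulrDr mulrA lerD2l mulrA.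
  apply: le_trans (ler_norm _) _; rewrite normrM ns2 normrM normr_sg a0 mul1r //.
have na : 0 < `|a| by rewrite normr_gt0.
have : 2 * y ^+ 2 / `|a| <= 2 * (`|b| + `|c|) ^+ 2 / `|a| * s ^+ 2.
  have hi : 0 <= `|a|^-1 by rewrite invr_ge0 ltW.
  have h := ler_wpM2r hi hy2; rewrite !expr2 in h *; nra.
rewrite mulrDl; lra.
Qed.

Definition lin (R : realType) N M k (Y : 'M[R]_(N, M)) (alpha nu gamma : R)
  (A : 'M[R]_(N, k)) (P : 'M[R]_(k, M)) (DA : 'M[R]_(N, k)) (DP : 'M[R]_(k, M)) : R :=
  \sum_(i < N) \sum_(j < M) 2 * (Y - A *m P) i j * (- (DA *m P + A *m DP) i j)
  + alpha * (\sum_(i < N) \sum_(j < k) psi (A i j) (DA i j))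
  + nu * (\sum_(i < k) \sum_(j < M) psi (P i j) (DP i j))
  + gamma * (\sum_(i < k) \sum_(j < k)
       psi ((P *m P^T - 1%:M) i j) ((DP *m P^T + P *m DP^T) i j)).

Lemma upx_sq (R : realType) (a b c : R) :
  upx (fun s => (a + b * s + c * s ^+ 2) ^+ 2) (a ^+ 2) (2 * a * b).
Proof. by eexists => s s0 s1; apply: sq_bound. Qed.

Lemma upx_abs (R : realType) (a b c : R) :
  upx (fun s => `|a + b * s + c * s ^+ 2|) `|a| (psi a b).
Proof. by eexists => s s0 s1; apply: abs_bound. Qed.

Lemma prod_entry (R : realType) m n p (X U : 'M[R]_(m, n)) (Z V : 'M[R]_(n, p)) s i j :
  ((X + s *: U) *m (Z + s *: V)) i j =
  (X *m Z) i j + (U *m Z + X *m V) i j * s + (U *m V) i j * s ^+ 2.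
Proof.
rewrite !mxE.
have -> : \sum_(l < n) (X + s *: U) i l * (Z + s *: V) l j =
  \sum_(l < n) (X i l * Z l j + (U i l * Z l j + X i l * V l j) * s
     + U i l * V l j * s ^+ 2).
  by apply: eq_bigr => l _; rewrite !mxE; ring.
rewrite !big_split /= -!mulr_suml big_split /=; congr (_ + _ * _ + _).
Qed.

Lemma J_upx (R : realType) N M k (Y : 'M[R]_(N, M)) (alpha nu gamma : R)
  (A : 'M[R]_(N, k)) (P : 'M[R]_(k, M)) (DA : 'M[R]_(N, k)) (DP : 'M[R]_(k, M)) :
  0 <= alpha -> 0 <= nu -> 0 <= gamma ->
  upx (fun s => Jobj Y alpha nu gamma (A + s *: DA) (P + s *: DP))
      (Jobj Y alpha nu gamma A P) (lin Y alpha nu gamma A P DA DP).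
Proof.
move=> ha hn hg.
rewrite /Jobj /frob2sq /frob1 /lin.
apply: (@upx_ext _ _ (fun s =>
  \sum_(i < N) \sum_(j < M) ((Y - A *m P) i j + (- (DA *m P + A *m DP) i j) * s
      + (- (DA *m DP) i j) * s ^+ 2) ^+ 2
  + alpha * (\sum_(i < N) \sum_(j < k) `|A i j + DA i j * s + 0 * s ^+ 2|)
  + nu * (\sum_(i < k) \sum_(j < M) `|P i j + DP i j * s + 0 * s ^+ 2|)
  + gamma * (\sum_(i < k) \sum_(j < k)
       `|(P *m P^T - 1%:M) i j + (DP *m P^T + P *m DP^T) i j * s
          + (DP *m DP^T) i j * s ^+ 2|))).
  move=> s _ _.
  congr (_ + _ * _ + _ * _ + _ * _).
  - apply: eq_bigr => i _; apply: eq_bigr => j _; congr (_ ^+ 2).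
    rewrite [in LHS]mxE [in LHS]mxE prod_entry !mxE; ring.
  - apply: eq_bigr => i _; apply: eq_bigr => j _; congr `|_|.
    rewrite !mxE; ring.
  - apply: eq_bigr => i _; apply: eq_bigr => j _; congr `|_|.
    rewrite !mxE; ring.
  - apply: eq_bigr => i _; apply: eq_bigr => j _; congr `|_|.
    have -> : (P + s *: DP)^T = P^T + s *: DP^T by apply/matrixP => x y; rewrite !mxE.
    rewrite [in LHS]mxE prod_entry !mxE; ring.
apply: upx_add; [apply: upx_add; [apply: upx_add|]|].
- by apply: upx_sum => i; apply: upx_sum => j; apply: upx_sq.
- by apply: upx_scale => //; apply: upx_sum => i; apply: upx_sum => j; apply: upx_abs.
- by apply: upx_scale => //; apply: upx_sum => i; apply: upx_sum => j; apply: upx_abs.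
- by apply: upx_scale => //; apply: upx_sum => i; apply: upx_sum => j; apply: upx_abs.
Qed.

Lemma pos_min4 (R : realType) (a b c d : R) : 0 < a -> 0 < b -> 0 < c -> 0 < d ->
  exists s, [/\ 0 < s, s <= a, s <= b, s <= c & s <= d].
Proof.
move=> a0 b0 c0 d0; exists (Num.min a (Num.min b (Num.min c d))).
rewrite !lt_min a0 b0 c0 d0 !ge_min !lexx !orbT /=; split => //.
Qed.

Lemma lin_nonneg (R : realType) N M k (Y : 'M[R]_(N, M)) (alpha nu gamma : R)
  (A : 'M[R]_(N, k)) (P : 'M[R]_(k, M)) (DA : 'M[R]_(N, k)) (DP : 'M[R]_(k, M))
  (B delta : R) :
  0 <= alpha -> 0 <= nu -> 0 <= gamma ->
  local_minimizer Y alpha nu gamma A P -> 0 < delta ->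
  (forall s, 0 < s -> s < delta -> mx_nonneg (A + s *: DA) /\ mx_nonneg (P + s *: DP)) ->
  (forall i j, `|DA i j| <= B) -> (forall i j, `|DP i j| <= B) ->
  0 <= lin Y alpha nu gamma A P DA DP.
Proof.
move=> ha hn hg [_ [_ [eps [e0 Hmin]]]] d0 Hfeas HBA HBP.
have [K HK] := J_upx Y A P DA DP ha hn hg.
rewrite leNgt; apply/negP => hl.
set l := lin Y alpha nu gamma A P DA DP in hl HK.
set B' := `|B| + 1.
have B'0 : 0 < B' by rewrite /B'; have := normr_ge0 B; lra.
set K' := `|K| + 1.
have K'0 : 0 < K' by rewrite /K'; have := normr_ge0 K; lra.
have p1 : 0 < delta / 2 by rewrite divr_gt0.
have p2 : 0 < eps / (2 * B') by rewrite divr_gt0 // mulr_gt0.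
have p3 : 0 < - l / (2 * K') by rewrite divr_gt0 ?mulr_gt0 // oppr_gt0.
have [s [s0 s1 s2 s3 s4]] := pos_min4 p1 ltr01 p2 p3.
have sd : s < delta by lra.
have [fA fP] := Hfeas s s0 sd.
have sB : s * B' < eps.
  rewrite ler_pdivlMr in s3; last lra.
  lra.
have sK : s * K' <= - l / 2.
  rewrite ler_pdivlMr in s4; last lra.
  lra.
have hBB : B <= B' by rewrite /B'; have := ler_norm B; lra.
have J1 := Hmin _ _ fA fP.
have J2 : Jobj Y alpha nu gamma A P <=
    Jobj Y alpha nu gamma (A + s *: DA) (P + s *: DP).
  apply: J1 => i j; rewrite !mxE addrAC subrr add0r normrM gtr0_norm //.
  - apply: le_lt_trans sB; apply: ler_wpM2l; [lra|]; apply: le_trans (HBA i j) _; lra.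
  - apply: le_lt_trans sB; apply: ler_wpM2l; [lra|]; apply: le_trans (HBP i j) _; lra.
have J3 := HK s s0 s2.
have hK : K <= K' by rewrite /K'; have := ler_norm K; lra.
have : 0 <= l * s + K * s ^+ 2 by lra.
rewrite expr2 => h.
have : K * (s * s) <= K' * (s * s) by rewrite ler_wpM2r // mulr_ge0 // ltW.
nra.
Qed.

Definition ip (R : realType) m n (X Z : 'M[R]_(m, n)) : R :=
  \sum_(i < m) \sum_(j < n) X i j * Z i j.

Lemma ip_mulr (R : realType) m n p (X : 'M[R]_(m, p)) (U : 'M[R]_(m, n)) (V : 'M[R]_(n, p)) :
  ip X (U *m V) = ip (X *m V^T) U.
Proof.
rewrite /ip; apply: eq_bigr => i _.
transitivity (\sum_(j < p) \sum_(l < n) X i j * (U i l * V l j)).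
  by apply: eq_bigr => j _; rewrite mxE mulr_sumr.
rewrite exchange_big /=; apply: eq_bigr => l _; rewrite mxE mulr_suml.
by apply: eq_bigr => j _; rewrite mxE; ring.
Qed.

Lemma ip_mull (R : realType) m n p (X : 'M[R]_(m, p)) (U : 'M[R]_(m, n)) (V : 'M[R]_(n, p)) :
  ip X (U *m V) = ip (U^T *m X) V.
Proof.
rewrite /ip.
transitivity (\sum_(i < m) \sum_(j < p) \sum_(l < n) U i l * X i j * V l j).
  apply: eq_bigr => i _; apply: eq_bigr => j _; rewrite mxE mulr_sumr.
  by apply: eq_bigr => l _; ring.
rewrite exchange_big /=.
transitivity (\sum_(j < p) \sum_(l < n) \sum_(i < m) U i l * X i j * V l j).
  by apply: eq_bigr => j _; rewrite exchange_big.
rewrite exchange_big /=; apply: eq_bigr => l _; apply: eq_bigr => j _.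
by rewrite !mxE mulr_suml; apply: eq_bigr => i _; rewrite mxE.
Qed.

Lemma ip_tr (R : realType) m n (X : 'M[R]_(m, n)) (Z : 'M[R]_(n, m)) :
  ip X Z^T = ip X^T Z.
Proof.
rewrite /ip exchange_big /=; apply: eq_bigr => j _; apply: eq_bigr => i _.
by rewrite !mxE.
Qed.

Lemma ipDr (R : realType) m n (X Z1 Z2 : 'M[R]_(m, n)) : ip X (Z1 + Z2) = ip X Z1 + ip X Z2.
Proof.
rewrite /ip -big_split; apply: eq_bigr => i _; rewrite -big_split.
by apply: eq_bigr => j _; rewrite mxE mulrDr.
Qed.

Lemma ipDl (R : realType) m n (X1 X2 Z : 'M[R]_(m, n)) : ip (X1 + X2) Z = ip X1 Z + ip X2 Z.
Proof.
rewrite /ip -big_split; apply: eq_bigr => i _; rewrite -big_split.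
by apply: eq_bigr => j _; rewrite mxE mulrDl.
Qed.

Lemma ipBr (R : realType) m n (X Z1 Z2 : 'M[R]_(m, n)) : ip X (Z1 - Z2) = ip X Z1 - ip X Z2.
Proof.
rewrite /ip -sumrB; apply: eq_bigr => i _; rewrite -sumrB.
by apply: eq_bigr => j _; rewrite !mxE mulrBr.
Qed.

Lemma ipZr (R : realType) m n (X Z : 'M[R]_(m, n)) c : ip X (c *: Z) = c * ip X Z.
Proof.
rewrite /ip mulr_sumr; apply: eq_bigr => i _; rewrite mulr_sumr.
by apply: eq_bigr => j _; rewrite mxE; ring.
Qed.

Lemma ipNr (R : realType) m n (X Z : 'M[R]_(m, n)) : ip X (- Z) = - ip X Z.
Proof. by rewrite -scaleN1r ipZr mulN1r. Qed.

Lemma sum_pick (R : realType) n (F : 'I_n -> R) (i : 'I_n) :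
  (forall j, j != i -> F j = 0) -> \sum_(j < n) F j = F i.
Proof. by move=> H; rewrite (bigD1 i) //= big1 ?addr0 // => j /H. Qed.

Lemma ip_delta (R : realType) m n (W : 'M[R]_(m, n)) c d :
  ip W (delta_mx c d) = W c d.
Proof.
rewrite /ip (@sum_pick _ _ _ c) => [|i ic].
  rewrite (@sum_pick _ _ _ d) => [|j jd]; first by rewrite mxE !eqxx mulr1.
  by rewrite mxE (negbTE jd) andbF mulr0.
by apply: big1 => j _; rewrite mxE (negbTE ic) mulr0.
Qed.

Lemma psi0 (R : realType) (x : R) : psi x 0 = 0.
Proof. by rewrite /psi; case: ifP; rewrite ?normr0 ?mulr0. Qed.

Definition Rres (R : realType) N M k (Y : 'M[R]_(N, M)) (A : 'M[R]_(N, k)) (P : 'M[R]_(k, M)) :=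
  (- 2) *: (Y - A *m P).

Lemma lin_split (R : realType) N M k (Y : 'M[R]_(N, M)) (alpha nu gamma : R)
  (A : 'M[R]_(N, k)) (P : 'M[R]_(k, M)) (DA : 'M[R]_(N, k)) (DP : 'M[R]_(k, M)) :
  lin Y alpha nu gamma A P DA DP =
  ip (Rres Y A P *m P^T) DA + ip (A^T *m Rres Y A P) DP
  + alpha * (\sum_(i < N) \sum_(j < k) psi (A i j) (DA i j))
  + nu * (\sum_(i < k) \sum_(j < M) psi (P i j) (DP i j))
  + gamma * (\sum_(i < k) \sum_(j < k)
       psi ((P *m P^T - 1%:M) i j) ((DP *m P^T + P *m DP^T) i j)).
Proof.
rewrite /lin -ip_mulr -ip_mull -ipDr; congr (_ + _ + _ + _).
rewrite /ip; apply: eq_bigr => i _; apply: eq_bigr => j _.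
by rewrite /Rres !mxE; ring.
Qed.

Lemma ip0 (R : realType) m n (X : 'M[R]_(m, n)) : ip X 0 = 0.
Proof. by rewrite /ip big1 // => i _; rewrite big1 // => j _; rewrite mxE mulr0. Qed.

Lemma sum_psi0 (R : realType) m n (X : 'M[R]_(m, n)) :
  \sum_(i < m) \sum_(j < n) psi (X i j) ((0 : 'M[R]_(m, n)) i j) = 0.
Proof. by rewrite big1 // => i _; rewrite big1 // => j _; rewrite mxE psi0. Qed.

Lemma sum_psi_delta (R : realType) m n (X : 'M[R]_(m, n)) c d e :
  \sum_(i < m) \sum_(j < n) psi (X i j) ((e *: delta_mx c d) i j) = psi (X c d) e.
Proof.
rewrite (@sum_pick _ _ _ c) => [|i ic].
  rewrite (@sum_pick _ _ _ d) => [|j jd]; first by rewrite !mxE !eqxx mulr1.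
  by rewrite !mxE (negbTE jd) andbF mulr0 psi0.
by apply: big1 => j _; rewrite !mxE (negbTE ic) mulr0 psi0.
Qed.

Lemma psi_pos1 (R : realType) (x e : R) : 0 < x -> psi x e = e.
Proof. by move=> hx; rewrite /psi gt_eqF // gtr0_sg // mul1r. Qed.

Lemma psi_nonneg (R : realType) (x e : R) : 0 <= x -> 0 <= e -> psi x e = e.
Proof.
move=> hx he; rewrite /psi; case: eqP => [_|/eqP xn]; first by rewrite ger0_norm.
by rewrite gtr0_sg ?mul1r // lt_neqAle eq_sym xn.
Qed.

Lemma lin_A (R : realType) N M k (Y : 'M[R]_(N, M)) (alpha nu gamma : R)
  (A : 'M[R]_(N, k)) (P : 'M[R]_(k, M)) i j e :
  lin Y alpha nu gamma A P (e *: delta_mx i j) 0 =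
  e * (Rres Y A P *m P^T) i j + alpha * psi (A i j) e.
Proof.
rewrite lin_split ipZr ip_delta ip0 sum_psi_delta sum_psi0.
rewrite mul0mx trmx0 mulmx0 addr0 addr0 sum_psi0.
by rewrite !mulr0 !addr0.
Qed.

Lemma A_facts (R : realType) N M k (Y : 'M[R]_(N, M)) (alpha nu gamma : R)
  (A : 'M[R]_(N, k)) (P : 'M[R]_(k, M)) :
  0 <= alpha -> 0 <= nu -> 0 <= gamma ->
  local_minimizer Y alpha nu gamma A P ->
  forall i j, 0 <= (Rres Y A P *m P^T) i j + alpha /\
    (0 < A i j -> (Rres Y A P *m P^T) i j + alpha = 0).
Proof.
move=> ha hn hg Hlm i j.
have [hA [hP _]] := Hlm.
have hP0 : forall s, mx_nonneg (P + s *: (0 : 'M[R]_(k, M))).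
  by move=> s a b; rewrite !mxE mulr0 addr0.
have h1 : 0 <= lin Y alpha nu gamma A P (1 *: delta_mx i j) 0.
  apply: (@lin_nonneg _ _ _ _ _ _ _ _ _ _ _ _ 1 1) => //.
  - move=> s s0 _; split => // a b; rewrite !mxE.
    apply: addr_ge0 => //; apply: mulr_ge0; first exact: ltW.
    by rewrite mul1r ler0n.
  - by move=> a b; rewrite !mxE mul1r; case: (_ && _); rewrite ?normr1 ?normr0.
  - by move=> a b; rewrite !mxE normr0.
rewrite lin_A psi_nonneg // mul1r in h1.
split; first lra.
move=> Apos.
have h2 : 0 <= lin Y alpha nu gamma A P ((- 1) *: delta_mx i j) 0.
  apply: (@lin_nonneg _ _ _ _ _ _ _ _ _ _ _ _ 1 (A i j)) => //.
  - move=> s s0 sA; split => // a b; rewrite !mxE.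
    case: (eqVneq a i) => [->|ai]; case: (eqVneq b j) => [->|bj] /=;
      rewrite ?mulr1 ?mulr0 ?mulN1r ?mulrN ?mulr0 ?oppr0 ?addr0 //; try lra.
  - move=> a b; rewrite !mxE mulN1r normrN.
    by case: (_ && _); rewrite ?normr1 ?normr0.
  - by move=> a b; rewrite !mxE normr0.
rewrite lin_A psi_pos1 // in h2.
lra.
Qed.

Definition Lm (R : realType) k M (P : 'M[R]_(k, M)) : 'M[R]_k := P *m P^T - 1%:M.

Definition lam0 (R : realType) k M (P : 'M[R]_(k, M)) : 'M[R]_k :=
  \matrix_(a, b) (if Lm P a b == 0 then (if a == b then 0 else 1) else Num.sg (Lm P a b)).

Definition Wm (R : realType) N M k (Y : 'M[R]_(N, M)) (nu gamma : R)
  (A : 'M[R]_(N, k)) (P : 'M[R]_(k, M)) : 'M[R]_(k, M) :=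
  A^T *m Rres Y A P + nu *: const_mx 1 + gamma *: ((lam0 P + (lam0 P)^T) *m P).

Definition dL (R : realType) k M (P D : 'M[R]_(k, M)) : 'M[R]_k := D *m P^T + P *m D^T.

Definition rd (R : realType) k M (P D : 'M[R]_(k, M)) (a : 'I_k) : R :=
  \sum_(j < M) D a j * P a j.

Lemma dL_diag (R : realType) k M (P D : 'M[R]_(k, M)) a : dL P D a a = 2 * rd P D a.
Proof.
rewrite /dL /rd !mxE mulr_sumr -big_split /=; apply: eq_bigr => j _; rewrite !mxE; ring.
Qed.

Lemma ipZl (R : realType) m n (X Z : 'M[R]_(m, n)) c : ip (c *: X) Z = c * ip X Z.
Proof.
rewrite /ip mulr_sumr; apply: eq_bigr => i _; rewrite mulr_sumr.
by apply: eq_bigr => j _; rewrite mxE; ring.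
Qed.

Lemma lam0E (R : realType) k M (P : 'M[R]_(k, M)) a b :
  lam0 P a b = if Lm P a b == 0 then (if a == b then 0 else 1) else Num.sg (Lm P a b).
Proof. by rewrite /lam0 mxE. Qed.

Lemma psi_L (R : realType) k M (P : 'M[R]_(k, M)) a b d :
  (a != b -> Lm P a b = 0 -> 0 <= d) ->
  psi (Lm P a b) d = lam0 P a b * d + (if (a == b) && (Lm P a b == 0) then `|d| else 0).
Proof.
move=> H; rewrite /psi lam0E.
case: (eqVneq (Lm P a b) 0) => [L0|Ln]; last by rewrite andbF addr0.
rewrite ?andbT.
case: (eqVneq a b) => [_|ab] /=; first by rewrite mul0r add0r.
by rewrite mul1r addr0 ger0_norm //; apply: H.
Qed.

Lemma lin_P (R : realType) N M k (Y : 'M[R]_(N, M)) (alpha nu gamma : R)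
  (A : 'M[R]_(N, k)) (P : 'M[R]_(k, M)) (D : 'M[R]_(k, M)) :
  mx_nonneg P ->
  (forall i j, P i j = 0 -> 0 <= D i j) ->
  (forall a b, a != b -> Lm P a b = 0 -> 0 <= dL P D a b) ->
  lin Y alpha nu gamma A P 0 D =
  ip (Wm Y nu gamma A P) D +
  gamma * \sum_(a < k) (if Lm P a a == 0 then `|dL P D a a| else 0).
Proof.
move=> hP H1 H2.
rewrite lin_split ip0 sum_psi0 mulr0 add0r addr0.
have -> : \sum_(i < k) \sum_(j < M) psi (P i j) (D i j) = ip (const_mx 1) D.
  apply: eq_bigr => i _; apply: eq_bigr => j _; rewrite mxE mul1r.
  have := hP i j; rewrite le_eqVlt => /orP [/eqP e|pp].
    by rewrite -e psi_nonneg // H1.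
  by rewrite psi_pos1.
have -> : \sum_(i < k) \sum_(j < k)
    psi ((P *m P^T - 1%:M) i j) ((D *m P^T + P *m D^T) i j) =
  ip (lam0 P) (dL P D) + \sum_(a < k) (if Lm P a a == 0 then `|dL P D a a| else 0).
  transitivity (\sum_(i < k) \sum_(j < k) (lam0 P i j * dL P D i j +
     (if (i == j) && (Lm P i j == 0) then `|dL P D i j| else 0))).
    apply: eq_bigr => i _; apply: eq_bigr => j _; exact: psi_L (H2 i j).
  rewrite /ip -big_split; apply: eq_bigr => i _; rewrite big_split /=; congr (_ + _).
  rewrite (@sum_pick _ _ _ i); first by rewrite eqxx.
  by move=> j ji; rewrite eq_sym (negbTE ji).
rewrite /Wm !ipDl !ipZl mulmxDl ipDl /dL ipDr ip_mulr ip_mull ip_tr trmx_mul trmxK.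
ring.
Qed.
Lemma Lm_off (R : realType) k M (P : 'M[R]_(k, M)) a b : a != b ->
  Lm P a b = \sum_(j < M) P a j * P b j.
Proof.
move=> ab; rewrite /Lm !mxE (negbTE ab) mulr0n subr0.
by apply: eq_bigr => j _; rewrite mxE.
Qed.

Lemma orth (R : realType) k M (P : 'M[R]_(k, M)) a b : mx_nonneg P -> a != b ->
  Lm P a b = 0 -> forall j, P a j * P b j = 0.
Proof.
move=> hP ab; rewrite Lm_off // => h j.
by apply: (psumr_eq0P _ h) => // i _; apply: mulr_ge0.
Qed.

Definition supp (R : realType) k M (P D : 'M[R]_(k, M)) :=
  forall x j, D x j != 0 -> 0 < P x j.

Lemma dL_supp (R : realType) k M (P D : 'M[R]_(k, M)) a b : mx_nonneg P -> supp P D ->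
  a != b -> Lm P a b = 0 -> dL P D a b = 0.
Proof.
move=> hP hD ab L0; have ho := orth hP ab L0.
have ho' : forall j, P b j * P a j = 0 by move=> j; rewrite mulrC ho.
rewrite /dL !mxE big1 ?add0r; last first.
  move=> j _; rewrite mxE; case: (eqVneq (D a j) 0) => [->|dn]; first by rewrite mul0r.
  have := hD _ _ dn => pa; have := ho j; move/eqP; rewrite mulf_eq0.
  by case/orP => /eqP h; [move: pa; rewrite h ltxx | rewrite h mulr0].
apply: big1 => j _; rewrite mxE; case: (eqVneq (D b j) 0) => [->|dn]; first by rewrite mulr0.
have := hD _ _ dn => pb; have := ho' j; move/eqP; rewrite mulf_eq0.
by case/orP => /eqP h; [move: pb; rewrite h ltxx | rewrite h mul0r].
Qed.

Lemma dL_nonneg (R : realType) k M (P D : 'M[R]_(k, M)) a b : mx_nonneg P -> mx_nonneg D ->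
  0 <= dL P D a b.
Proof.
move=> hP hD; rewrite /dL !mxE; apply: addr_ge0; apply: sumr_ge0 => j _;
  rewrite mxE; apply: mulr_ge0 => //.
Qed.

Lemma rd_delta (R : realType) k M (P : 'M[R]_(k, M)) e c m a :
  rd P (e *: delta_mx c m) a = if a == c then e * P c m else 0.
Proof.
rewrite /rd; case: (eqVneq a c) => [->|ac].
  rewrite (@sum_pick _ _ _ m); first by rewrite !mxE !eqxx mulr1.
  by move=> j jm; rewrite !mxE (negbTE jm) andbF mulr0 mul0r.
by apply: big1 => j _; rewrite !mxE (negbTE ac) mulr0 mul0r.
Qed.

Lemma rdB (R : realType) k M (P D1 D2 : 'M[R]_(k, M)) a :
  rd P (D1 - D2) a = rd P D1 a - rd P D2 a.
Proof. by rewrite /rd -sumrB; apply: eq_bigr => j _; rewrite !mxE mulrBl. Qed.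

Lemma lin_P_supp (R : realType) N M k (Y : 'M[R]_(N, M)) (alpha nu gamma : R)
  (A : 'M[R]_(N, k)) (P : 'M[R]_(k, M)) (D : 'M[R]_(k, M)) :
  mx_nonneg P -> supp P D ->
  lin Y alpha nu gamma A P 0 D =
  ip (Wm Y nu gamma A P) D +
  gamma * \sum_(a < k) (if Lm P a a == 0 then `|dL P D a a| else 0).
Proof.
move=> hP hD; apply: lin_P => //.
  move=> i j Pij; case: (eqVneq (D i j) 0) => [->//|dn].
  by have := hD _ _ dn; rewrite Pij ltxx.
by move=> a b ab L0; rewrite dL_supp.
Qed.

Lemma A0_nonneg (R : realType) N k (A : 'M[R]_(N, k)) s :
  mx_nonneg A -> mx_nonneg (A + s *: (0 : 'M[R]_(N, k))).
Proof. by move=> hA a b; rewrite !mxE mulr0 addr0. Qed.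

Lemma F1 (R : realType) N M k (Y : 'M[R]_(N, M)) (alpha nu gamma : R)
  (A : 'M[R]_(N, k)) (P : 'M[R]_(k, M)) c m :
  0 <= alpha -> 0 <= nu -> 0 <= gamma ->
  local_minimizer Y alpha nu gamma A P -> P c m = 0 -> 0 <= Wm Y nu gamma A P c m.
Proof.
move=> ha hn hg Hlm P0; have [hA [hP _]] := Hlm.
have hD : mx_nonneg (1 *: delta_mx c m : 'M[R]_(k, M)).
  by move=> a b; rewrite !mxE mul1r ler0n.
have h : 0 <= lin Y alpha nu gamma A P 0 (1 *: delta_mx c m).
  apply: (@lin_nonneg _ _ _ _ _ _ _ _ _ _ _ _ 1 1) => //.
  - move=> s s0 _; split; first exact: A0_nonneg.
    move=> a b; rewrite mxE; apply: addr_ge0 => //; rewrite mxE.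
    apply: mulr_ge0; [exact: ltW | exact: hD].
  - by move=> a b; rewrite !mxE normr0.
  - by move=> a b; rewrite !mxE mul1r; case: (_ && _); rewrite ?normr1 ?normr0.
rewrite lin_P // in h; last by move=> a b _ _; apply: dL_nonneg.
rewrite ipZr ip_delta mul1r big1 ?mulr0 ?addr0 // in h.
move=> a _; rewrite dL_diag rd_delta P0 mulr0.
by case: (a == c); rewrite ?mulr0 ?normr0; case: ifP.
Qed.

Lemma F2 (R : realType) N M k (Y : 'M[R]_(N, M)) (alpha nu gamma : R)
  (A : 'M[R]_(N, k)) (P : 'M[R]_(k, M)) c m e :
  0 <= alpha -> 0 <= nu -> 0 <= gamma ->
  local_minimizer Y alpha nu gamma A P -> 0 < P c m -> (e = 1 \/ e = -1) ->
  0 <= e * Wm Y nu gamma A P c m + gamma * (if Lm P c c == 0 then 2 * P c m else 0).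
Proof.
move=> ha hn hg Hlm Pp he; have [hA [hP _]] := Hlm.
have ne : `|e| = 1 by case: he => ->; rewrite ?normrN normr1.
have hs : supp P (e *: delta_mx c m).
  move=> x j; rewrite !mxE; case: (eqVneq x c) => [->|xc]; case: (eqVneq j m) => [->|jm] //=;
    by rewrite mulr0 eqxx.
have h : 0 <= lin Y alpha nu gamma A P 0 (e *: delta_mx c m).
  apply: (@lin_nonneg _ _ _ _ _ _ _ _ _ _ _ _ 1 (P c m)) => //.
  - move=> s s0 sP; split; first exact: A0_nonneg.
    move=> a b; rewrite !mxE.
    case: (eqVneq a c) => [->|ac]; case: (eqVneq b m) => [->|bm] /=;
      rewrite ?mulr1 ?mulr0 ?addr0 //.
    have := hP a b; case: he => ->; lra.
  - by move=> a b; rewrite !mxE normr0.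
  - move=> a b; rewrite !mxE normrM ne mul1r.
    by case: (_ && _); rewrite ?normr1 ?normr0.
rewrite lin_P_supp // ipZr ip_delta in h.
rewrite (@sum_pick _ _ _ c) in h; last first.
  by move=> a ac; rewrite dL_diag rd_delta (negbTE ac) mulr0 normr0; case: ifP.
rewrite dL_diag rd_delta eqxx normrM normrM ne mul1r (gtr0_norm Pp) in h.
by rewrite ger0_norm // in h.
Qed.

Lemma F3 (R : realType) N M k (Y : 'M[R]_(N, M)) (alpha nu gamma : R)
  (A : 'M[R]_(N, k)) (P : 'M[R]_(k, M)) c m m' :
  0 <= alpha -> 0 <= nu -> 0 <= gamma ->
  local_minimizer Y alpha nu gamma A P -> m != m' -> 0 < P c m -> 0 < P c m' ->
  0 <= P c m' * Wm Y nu gamma A P c m - P c m * Wm Y nu gamma A P c m'.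
Proof.
move=> ha hn hg Hlm mm Pp Pp'; have [hA [hP _]] := Hlm.
set x := P c m'; set y := P c m.
set D := x *: delta_mx c m - y *: delta_mx c m' : 'M[R]_(k, M).
have hs : supp P D.
  move=> a j; rewrite !mxE; case: (eqVneq a c) => [->|ac]; last by rewrite /= !mulr0 subrr eqxx.
  case: (eqVneq j m) => [->|jm] //=; case: (eqVneq j m') => [->|jm'] //=.
  by rewrite !mulr0 subrr eqxx.
have h : 0 <= lin Y alpha nu gamma A P 0 D.
  apply: (@lin_nonneg _ _ _ _ _ _ _ _ _ _ _ _ (x + y) (x / y)) => //.
  - by rewrite divr_gt0.
  - move=> s s0 sP; split; first exact: A0_nonneg.
    have sy : s * y < x by rewrite -ltr_pdivlMr.
    move=> a b; rewrite !mxE.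
    case: (eqVneq a c) => [->|ac] /=; last by rewrite !mulr0 subrr mulr0 addr0; apply: hP.
    case: (eqVneq b m) => [->|bm] /=.
      rewrite (negbTE mm) /= mulr0 subr0 mulr1; apply: addr_ge0; first exact: ltW.
      by apply: mulr_ge0; apply: ltW.
    case: (eqVneq b m') => [->|bm'] /=.
      rewrite mulr0 sub0r mulr1 -/x; lra.
    by rewrite !mulr0 subrr mulr0 addr0; apply: hP.
  - by move=> a b; rewrite !mxE normr0 addr_ge0 // ltW.
  - move=> a b; rewrite /D !mxE.
    case: (eqVneq a c) => [_|ac] /=; last by rewrite !mulr0 subrr normr0 addr_ge0 // ltW.
    case: (eqVneq b m) => [->|bm] /=.
      by rewrite (negbTE mm) mulr0 subr0 mulr1 gtr0_norm // lerDl ltW.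
    case: (eqVneq b m') => [_|bm'] /=.
      by rewrite mulr0 sub0r mulr1 normrN gtr0_norm // lerDr ltW.
    by rewrite !mulr0 subrr normr0 addr_ge0 // ltW.
rewrite lin_P_supp // /D ipBr !ipZr !ip_delta big1 ?mulr0 ?addr0 // in h.
move=> a _; rewrite dL_diag /D rdB !rd_delta.
case: (a == c); rewrite ?subrr ?mulr0 ?normr0; case: ifP => // _.
have -> : x * P c m - y * P c m' = 0 by rewrite /x /y; ring.
by rewrite mulr0 normr0.
Qed.

Lemma proj_ok (R : realType) (c l z : R) : 0 < c ->
  ((z != 0 /\ l = Num.sg z) \/ (z = 0 /\ `|l| <= 1)) ->
  l = (l + c * z) / Num.max 1 `|l + c * z|.
Proof.
move=> c0 [[zn ->]|[-> hl]].
  case: (ltrgt0P z) zn => // hz _.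
    rewrite gtr0_sg // ger0_norm; last by rewrite addr_ge0 // mulr_ge0 // ltW.
    have h : 1 <= 1 + c * z by rewrite lerDl mulr_ge0 // ltW.
    rewrite max_r // divff //; apply: lt0r_neq0; lra.
  have cz : c * z < 0 by rewrite pmulr_rlt0.
  rewrite ltr0_sg // ler0_norm; last lra.
  have h : 1 <= - (-1 + c * z) by lra.
  rewrite max_r // invrN mulrN divff //.
  apply: ltr0_neq0; lra.
by rewrite mulr0 addr0 max_l // divr1.
Qed.

Lemma min_ok (R : realType) (c mu z : R) : 0 < c -> mu <= 0 -> 0 <= z ->
  (0 < z -> mu = 0) -> mu = Num.min (mu + c * z) 0.
Proof.
move=> c0 hm hz H.
case: (ltrgt0P z) hz => // [zp _|-> _].
  rewrite H // add0r min_r //; apply: mulr_ge0; exact: ltW.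
by rewrite mulr0 addr0 min_l.
Qed.

Lemma zmod_cancel (V : zmodType) (X Z : V) : 0 = X + - (X + Z) + Z.
Proof. by rewrite opprD addrA subrr add0r addNr. Qed.

Definition tau (R : realType) N M k (Y : 'M[R]_(N, M)) (nu gamma : R)
  (A : 'M[R]_(N, k)) (P : 'M[R]_(k, M)) (a : 'I_k) : R :=
  if [pick j | 0 < P a j] is Some j then
    (if gamma == 0 then 0 else - Wm Y nu gamma A P a j / (2 * gamma * P a j))
  else 0.

Definition Tm (R : realType) N M k (Y : 'M[R]_(N, M)) (nu gamma : R)
  (A : 'M[R]_(N, k)) (P : 'M[R]_(k, M)) : 'M[R]_k :=
  \matrix_(a, b) (if (a == b) && (Lm P a b == 0) then tau Y nu gamma A P a else 0).

Lemma TmE (R : realType) N M k (Y : 'M[R]_(N, M)) (nu gamma : R)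
  (A : 'M[R]_(N, k)) (P : 'M[R]_(k, M)) a b :
  Tm Y nu gamma A P a b = if (a == b) && (Lm P a b == 0) then tau Y nu gamma A P a else 0.
Proof. by rewrite /Tm mxE. Qed.

Lemma W_bound (R : realType) N M k (Y : 'M[R]_(N, M)) (alpha nu gamma : R)
  (A : 'M[R]_(N, k)) (P : 'M[R]_(k, M)) c m :
  0 <= alpha -> 0 <= nu -> 0 <= gamma ->
  local_minimizer Y alpha nu gamma A P -> 0 < P c m ->
  `|Wm Y nu gamma A P c m| <= gamma * (if Lm P c c == 0 then 2 * P c m else 0).
Proof.
move=> ha hn hg Hlm Pp.
have h1 := @F2 _ _ _ _ Y alpha nu gamma A P c m 1 ha hn hg Hlm Pp (or_introl erefl).
have h2 := @F2 _ _ _ _ Y alpha nu gamma A P c m (-1) ha hn hg Hlm Pp (or_intror erefl).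
rewrite ler_norml; apply/andP; split; lra.
Qed.

Lemma tau_bound (R : realType) N M k (Y : 'M[R]_(N, M)) (alpha nu gamma : R)
  (A : 'M[R]_(N, k)) (P : 'M[R]_(k, M)) a :
  0 <= alpha -> 0 <= nu -> 0 <= gamma ->
  local_minimizer Y alpha nu gamma A P -> Lm P a a = 0 ->
  `|tau Y nu gamma A P a| <= 1.
Proof.
move=> ha hn hg Hlm L0; rewrite /tau.
case: pickP => [j Pp|_]; last by rewrite normr0.
case: eqP => [_|/eqP g0]; first by rewrite normr0.
have := W_bound ha hn hg Hlm Pp; rewrite L0 eqxx => hb.
have gp : 0 < gamma by rewrite lt_neqAle eq_sym g0.
have den : 0 < 2 * gamma * P a j by rewrite !mulr_gt0.
rewrite normrM normrN normfV (gtr0_norm den) ler_pdivrMr // mul1r.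
by rewrite mulrA [gamma * 2]mulrC in hb.
Qed.

Lemma tau_eq (R : realType) N M k (Y : 'M[R]_(N, M)) (alpha nu gamma : R)
  (A : 'M[R]_(N, k)) (P : 'M[R]_(k, M)) c m :
  0 <= alpha -> 0 <= nu -> 0 <= gamma ->
  local_minimizer Y alpha nu gamma A P -> 0 < P c m -> Lm P c c = 0 ->
  Wm Y nu gamma A P c m + gamma * (2 * tau Y nu gamma A P c * P c m) = 0.
Proof.
move=> ha hn hg Hlm Pp L0; rewrite /tau.
case: pickP => [j Pj|hn0]; last by have := hn0 m; rewrite Pp.
case: eqP => [g0|/eqP g0].
  have := W_bound ha hn hg Hlm Pp; rewrite g0 mul0r normr_le0 => /eqP ->.
  by rewrite mul0r add0r.
have hj : P c j * Wm Y nu gamma A P c m = P c m * Wm Y nu gamma A P c j.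
  case: (eqVneq m j) => [->//|mj].
  have := F3 ha hn hg Hlm mj Pp Pj.
  have jm : j != m by rewrite eq_sym.
  have := F3 ha hn hg Hlm jm Pj Pp.
  lra.
have Pjn : P c j != 0 by rewrite gt_eqF.
have e : Wm Y nu gamma A P c m = P c m * Wm Y nu gamma A P c j / P c j.
  by rewrite -hj mulrC mulrA mulVf // mul1r.
rewrite e; field.
by rewrite Pjn g0.
Qed.

Lemma TT_entry (R : realType) N M k (Y : 'M[R]_(N, M)) (nu gamma : R)
  (A : 'M[R]_(N, k)) (P : 'M[R]_(k, M)) c m :
  ((Tm Y nu gamma A P + (Tm Y nu gamma A P)^T) *m P) c m =
  2 * Tm Y nu gamma A P c c * P c m.
Proof.
have E : forall a b, (Tm Y nu gamma A P + (Tm Y nu gamma A P)^T) a b =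
   Tm Y nu gamma A P a b + Tm Y nu gamma A P b a by move=> a b; rewrite !mxE.
rewrite mxE (@sum_pick _ _ _ c).
  by rewrite E; ring.
move=> b bc; rewrite E !TmE (negbTE bc) eq_sym (negbTE bc) /=; ring.
Qed.

Lemma mx_cancel2 (R : realType) m n (X Z1 Z2 : 'M[R]_(m, n)) :
  0 = X + - (X + Z1 + Z2) + Z1 + Z2.
Proof. by apply/matrixP => i j; rewrite !mxE; ring. Qed.

Lemma entry_lin (R : realType) m n (X Z : 'M[R]_(m, n)) c i j :
  (- (X + c *: Z)) i j = - (X i j + c * Z i j).
Proof. by rewrite !mxE. Qed.

Lemma entry_add (R : realType) m n (X Z : 'M[R]_(m, n)) i j :
  (X + Z) i j = X i j + Z i j.
Proof. by rewrite !mxE. Qed.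

Lemma proj_boxE (R : realType) m n c (X Z : 'M[R]_(m, n)) i j :
  proj_box c X Z i j = (X i j + c * Z i j) / Num.max 1 `|X i j + c * Z i j|.
Proof. by rewrite mxE. Qed.

Lemma min0E (R : realType) m n c (X Z : 'M[R]_(m, n)) i j :
  min0 c X Z i j = Num.min (X i j + c * Z i j) 0.
Proof. by rewrite mxE. Qed.

Lemma muP_zero (R : realType) N M k (Y : 'M[R]_(N, M)) (alpha nu gamma : R)
  (A : 'M[R]_(N, k)) (P : 'M[R]_(k, M)) c m :
  0 <= alpha -> 0 <= nu -> 0 <= gamma ->
  local_minimizer Y alpha nu gamma A P -> 0 < P c m ->
  Wm Y nu gamma A P c m + gamma * (2 * Tm Y nu gamma A P c c * P c m) = 0.
Proof.
move=> ha hn hg Hlm Pp; rewrite TmE eqxx /=.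
case: (eqVneq (Lm P c c) 0) => [L0|Ln] /=.
  exact: (tau_eq ha hn hg Hlm Pp L0).
have := W_bound ha hn hg Hlm Pp; rewrite (negbTE Ln) mulr0 normr_le0 => /eqP ->.
by rewrite mulr0 mul0r mulr0 addr0.
Qed.

Unset Implicit Arguments.
Theorem theorem5 (R : realType) (N M k : nat) (Y : 'M[R]_(N, M))
  (alpha nu gamma : R) (A : 'M[R]_(N, k)) (P : 'M[R]_(k, M)) :
  (1 <= k)%N -> 0 <= alpha -> 0 <= nu -> 0 <= gamma ->
  local_minimizer Y alpha nu gamma A P ->
  forall c1 c2 : R, 0 < c1 -> 0 < c2 ->
  exists (L : 'M[R]_k) (muA lamA : 'M[R]_(N, k)) (muP lamP : 'M[R]_(k, M))
         (lamL : 'M[R]_k),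
    0 = (2%:R *: (A *m P *m P^T)) - (2%:R *: (Y *m P^T)) + muA + alpha *: lamA
     /\ lamA = proj_box c2 lamA A
     /\ muA = min0 c1 muA A
     /\ 0 = - (2%:R *: (A^T *m Y)) + (2%:R *: (A^T *m A *m P)) + muP + nu *: lamP
            + gamma *: ((lamL + lamL^T) *m P)
     /\ lamP = proj_box c2 lamP P
     /\ L = P *m P^T - 1%:M
     /\ lamL = proj_box c2 lamL L
     /\ muP = min0 c1 muP P.
Proof.
move=> _ ha hn hg Hlm c1 c2 c10 c20.
have [hA [hP _]] := Hlm.
set lamA : 'M[R]_(N, k) := const_mx 1.
set lamP : 'M[R]_(k, M) := const_mx 1.
set T := Tm Y nu gamma A P.
set lamL := lam0 P + T.
set XA := (2%:R *: (A *m P *m P^T)) - (2%:R *: (Y *m P^T)).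
set XP := - (2%:R *: (A^T *m Y)) + (2%:R *: (A^T *m A *m P)) + nu *: lamP
            + gamma *: ((lamL + lamL^T) *m P).
have hXA : XA = Rres Y A P *m P^T.
  apply/matrixP => i j; rewrite /XA /Rres.
  rewrite -scalemxAl mulmxBl !mxE.
  ring.
have hR : A^T *m Rres Y A P = - (2%:R *: (A^T *m Y)) + 2%:R *: (A^T *m A *m P).
  by rewrite /Rres -scalemxAr mulmxBr mulmxA scalerBr !scaleNr opprK.
have tD : (lam0 P + T)^T = (lam0 P)^T + T^T by apply/matrixP => a b; rewrite !mxE.
have hXP : XP = Wm Y nu gamma A P + gamma *: ((T + T^T) *m P).
  rewrite /XP /Wm hR /lamL tD.
  have -> : lam0 P + T + ((lam0 P)^T + T^T) = (lam0 P + (lam0 P)^T) + (T + T^T).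
    by rewrite -!addrA; congr (_ + _); rewrite addrCA.
  by rewrite mulmxDl scalerDr !addrA.
exists (P *m P^T - 1%:M), (- (XA + alpha *: lamA)), lamA,
  (- (- (2%:R *: (A^T *m Y)) + (2%:R *: (A^T *m A *m P)) + nu *: lamP
      + gamma *: ((lamL + lamL^T) *m P))), lamP, lamL.
have one_proj : forall x : R, 0 <= x -> 1 = (1 + c2 * x) / Num.max 1 `|1 + c2 * x|.
  move=> x x0; apply: proj_ok => //.
  case: (eqVneq x 0) => [->|xn]; first by right; rewrite normr1.
  by left; split => //; rewrite gtr0_sg // lt_neqAle eq_sym xn.
have muAE : forall i j, (- (XA + alpha *: lamA)) i j = - ((Rres Y A P *m P^T) i j + alpha).
  move=> i j; rewrite hXA; set G := Rres Y A P *m P^T.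
  by rewrite !mxE mulr1.
have muPE : forall c m, (- XP) c m =
    - (Wm Y nu gamma A P c m + gamma * (2 * T c c * P c m)).
  by move=> c m; rewrite hXP entry_lin TT_entry.
split; first exact: zmod_cancel.
split.
  apply/matrixP => i j; rewrite [in RHS]mxE /lamA !mxE; exact: one_proj.
split.
  apply/matrixP => i j; rewrite [in RHS]mxE muAE.
  have [h1 h2] := A_facts ha hn hg Hlm i j.
  apply: min_ok => //; first lra.
  by move=> Ap; rewrite h2 // oppr0.
split; first exact: mx_cancel2.
split.
  apply/matrixP => i j; rewrite [in RHS]mxE /lamP !mxE; exact: one_proj.
split; first by [].
split.
  apply/matrixP => a b.
  rewrite proj_boxE -[(P *m P^T - 1%:M) a b]/(Lm P a b) /lamL entry_add lam0E TmE.
  case: (eqVneq (Lm P a b) 0) => [L0|Ln] /=.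
    apply: proj_ok => //; right; split => //.
    case: (eqVneq a b) => [e|ne] /=.
      by move: L0; rewrite -e add0r => L0; exact: (tau_bound ha hn hg Hlm L0).
    by rewrite addr0 normr1.
  by apply: proj_ok => //; left; split => //; rewrite andbF addr0.
apply/matrixP => c m; rewrite min0E muPE.
apply: min_ok => //.
- have := hP c m; rewrite le_eqVlt => /orP [/eqP e|Pp].
    rewrite -e mulr0 mulr0 addr0 oppr_le0; exact: (F1 ha hn hg Hlm (esym e)).
  by rewrite /T (muP_zero ha hn hg Hlm Pp) oppr0.
- by move=> Pp; rewrite /T (muP_zero ha hn hg Hlm Pp) oppr0.
Qed.
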